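(* Let $n\ge1$. The matrix $D^n$ is positive semi-definite. For $j,k\in\{0,\dots,2^n-1\}$: $D^n_{jk}=0$ if $j,k$ have different parity; if $j,k$ have the same parity then $D^n_{jk}=1/2^n$ when $c_n(j)\equiv c_n(k)\pmod 4$ and $D^n_{jk}=-1/2^n$ when $c_n(j)\not\equiv c_n(k)\pmod 4$. Moreover $\sum_{j,k}D^n_{jk}=1$.
   Context: For $n\ge1$, an $n$-path is a string $\alpha_0\alpha_1\cdots\alpha_n$ with $\alpha_k\in\{0,1\}$, $\alpha_0=0$; the set $\Omega_n$ of $n$-paths is identified with $\{0,1,\dots,2^n-1\}$, the path $\omega_j$ (or simply $j$) being the one whose string $\alpha_0\cdots\alpha_n$ is the binary representation of $j$ (with $\alpha_n$ least significant). $D^n$ is the $2^n\times2^n$ matrix with entries $D^n_{jk}=D^n(\omega_j,\omega_k)$, where for $\omega=\alpha_0\cdots\alpha_n$, $\omega'=\alpha'_0\cdots\alpha'_n$, $D^n(\omega,\omega')=2^{-n}\prod_{k=1}^n i^{|\alpha_k-\alpha_{k-1}|}\prod_{k=1}^n i^{-|\alpha'_k-\alpha'_{k-1}|}\,\delta_{\alpha_n\alpha'_n}$ ($i=\sqrt{-1}$). $c_n(j)$ denotes the number of position changes of the path $\omega_j$, i.e. the number of $k\in\{1,\dots,n\}$ with $\alpha_k\ne\alpha_{k-1}$. *)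

(* Defs.v *)
From HB Require Import structures.
From mathcomp Require Import all_boot all_order all_algebra.
From mathcomp Require Import algC.
Set Implicit Arguments. Unset Strict Implicit. Unset Printing Implicit Defensive.
Import Order.TTheory GRing.Theory Num.Theory.
Local Open Scope ring_scope.

(* The path omega_j, j < 2^n, is alpha_0 ... alpha_n = binary expansion of j,
   alpha_n least significant: alpha_k = bit (n-k) of j. *)
Definition alpha (n j k : nat) : bool := odd (j %/ 2 ^ (n - k)).

Definition cn (n j : nat) : nat :=
  (\sum_(1 <= k < n.+1) (alpha n j k != alpha n j k.-1 : nat))%N.

Definition Dmx (n : nat) : 'M[algC]_(2 ^ n) :=
  \matrix_(j < 2 ^ n, k < 2 ^ n)
    ((2 ^+ n)^-1
     * (\prod_(1 <= m < n.+1) 'i ^+ (alpha n j m != alpha n j m.-1))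
     * (\prod_(1 <= m < n.+1) ('i ^+ (alpha n k m != alpha n k m.-1))^-1)
     * (alpha n j n == alpha n k n)%:R).

Definition psd (N : nat) (A : 'M[algC]_N) : Prop :=
  (forall i j, A j i = (A i j)^*) /\
  (forall x : 'cV[algC]_N, 0 <= ((map_mx (fun z : algC => z^*) x)^T *m A *m x) 0 0).

(* Main.v *)
Require Import Defs.
From HB Require Import structures.
From mathcomp Require Import all_boot all_order all_algebra.
From mathcomp Require Import algC zify ring.
Import Order.TTheory GRing.Theory Num.Theory.
Local Open Scope ring_scope.

Lemma alpha_n n j : alpha n j n = odd j.
Proof. by rewrite /alpha subnn expn0 divn1. Qed.

Lemma Dmx_entry n (j k : 'I_(2 ^ n)) : Dmx n j k =
  (2 ^+ n)^-1 * 'i ^+ (cn n j) * ('i ^+ (cn n k))^-1 * (odd j == odd k)%:R.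
Proof. by rewrite mxE prodfV !prodrXr !alpha_n. Qed.

Lemma i_neq0 c : ('i ^+ c : algC) != 0.
Proof. by rewrite expf_neq0 // neq0Ci. Qed.

Lemma conj_ipow c : (('i ^+ c)^* : algC) = ('i ^+ c)^-1.
Proof.
have h : ('i ^+ c : algC) * (('i ^+ c)^*) = 1.
  have -> : (('i ^+ c)^* : algC) = (-'i) ^+ c by rewrite -conjCi rmorphXn.
  by rewrite -exprMn mulrN -expr2 sqrCi opprK expr1n.
by rewrite -[X in X = _]mul1r -(mulVf (i_neq0 c)) -mulrA h mulr1.
Qed.

Lemma i4 : ('i ^+ 4 : algC) = 1.
Proof. by rewrite (_ : 4 = 2 * 2)%N // exprM sqrCi expr2 mulrNN mulr1. Qed.

Lemma expi_mod4 a : ('i ^+ a : algC) = 'i ^+ (a %% 4).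
Proof. by rewrite {1}(divn_eq a 4) exprD mulnC exprM i4 expr1n mul1r. Qed.

Lemma ipow_eq c d : c = d %[mod 4] -> ('i ^+ c : algC) * ('i ^+ d)^-1 = 1.
Proof. by move=> h; rewrite expi_mod4 h -expi_mod4 mulfV ?i_neq0. Qed.

Lemma ipow_neq c d : odd c = odd d -> c <> d %[mod 4] ->
  ('i ^+ c : algC) * ('i ^+ d)^-1 = -1.
Proof.
move=> ho hn.
have h : (c %% 4 = (d + 2) %% 4)%N.
  have h1 := modn2 c; have h2 := modn2 d; rewrite ho in h1; lia.
rewrite expi_mod4 h -expi_mod4 exprD sqrCi mulrN1 mulNr mulfV ?i_neq0 //.
Qed.
Lemma alphaS n j k : (k <= n)%N -> alpha n.+1 j k = alpha n j./2 k.
Proof.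
move=> hk; rewrite /alpha subSn // expnS divnMA divn2 //.
Qed.

Lemma alphaSS n j : alpha n.+1 j n.+1 = odd j.
Proof. by rewrite /alpha subnn expn0 divn1. Qed.


Lemma cnS n j : cn n.+1 j = (cn n j./2 + (odd j./2 != odd j))%N.
Proof.
rewrite /cn big_nat_recr //= alphaSS alphaS // alpha_n; congr (_ + _)%N.
apply: eq_big_nat => k /andP [h1 h2].
rewrite !alphaS //; try lia.
by rewrite eq_sym.
Qed.

Lemma cn0 j : cn 0 j = 0%N.
Proof. by rewrite /cn big_geq. Qed.

Lemma odd_cn n j : (j < 2 ^ n)%N -> odd (cn n j) = odd j.
Proof.
elim: n j => [|n IH] j hj.
  by rewrite cn0; move: hj; rewrite expn0; case: j.
rewrite cnS oddD IH; last first.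
  by rewrite -divn2 ltn_divLR // -expnSr.
by case: (odd j./2); case: (odd j).
Qed.

Definition Av n (p : bool) (j : nat) : algC := (odd j == p)%:R * 'i ^+ (cn n j).

Lemma Dmx_sum n (j k : 'I_(2 ^ n)) :
  Dmx n j k = (2 ^+ n)^-1 * \sum_(p : bool) Av n p j * (Av n p k)^*.
Proof.
rewrite Dmx_entry big_bool /Av !rmorphM /= !rmorph_nat conj_ipow.
by case: (odd j); case: (odd k); rewrite /= ?mulr0 ?mul0r ?mulr1 ?mul1r ?addr0 ?add0r;
  ring.
Qed.

Lemma qf N (c : algC) (a : bool -> nat -> algC) (x y : 'I_N -> algC) :
  \sum_(j < N) \sum_(k < N) x j * (c * \sum_(p : bool) a p j * (a p k)^*) * y k
  = c * \sum_(p : bool) (\sum_(j < N) x j * a p j) * (\sum_(k < N) (a p k)^* * y k).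
Proof.
symmetry; rewrite mulr_sumr.
under eq_bigr => p _ do rewrite mulr_suml mulr_sumr.
under eq_bigr => p _ do under eq_bigr => j _ do rewrite mulrA mulr_sumr.
rewrite exchange_big; apply: eq_bigr => j _; rewrite exchange_big; apply: eq_bigr => k _ /=.
rewrite [c * _]mulr_sumr mulr_sumr mulr_suml; apply: eq_bigr => p _.
ring.
Qed.

Definition T n p : algC := \sum_(j < 2 ^ n) Av n p j.

Lemma sum_double m (F : nat -> algC) :
  \sum_(j < m.*2) F j = \sum_(j < m) (F j.*2 + F j.*2.+1).
Proof.
elim: m => [|m IH]; first by rewrite !big_ord0.
by rewrite doubleS !big_ord_recr /= IH addrA.
Qed.

Lemma TS n p : T n.+1 p = T n p + 'i * T n (~~ p).
Proof.
rewrite /T expnS mul2n sum_double mulr_sumr -big_split /=; apply: eq_bigr => j _.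
rewrite /Av !cnS odd_double /= uphalf_double half_double.
case: p; case: (odd j); rewrite /= odd_double /= ?addn0 ?addn1 ?exprS; ring.
Qed.

Lemma T0 p : T 0 p = (~~ p)%:R.
Proof. by rewrite /T expn0 big_ord1 /Av cn0 expr0 mulr1; case: p. Qed.

Lemma Tnorm n : T n false * (T n false)^* + T n true * (T n true)^* = 2 ^+ n.
Proof.
elim: n => [|n IH].
  by rewrite !T0 /= !rmorph_nat mul0r addr0 mulr1 expr0.
rewrite !TS /= !rmorphD !rmorphM /= conjCi exprS -IH.
set a := T n false; set b := T n true.
have hI : ('i : algC) * 'i = -1 by rewrite -expr2 sqrCi.
set I := 'i in hI *.
transitivity ((1 - I * I) * (a * a^* + b * b^*)); first ring.
by rewrite hI opprK.
Qed.

Lemma conjK (a : algC) : a^*^* = a.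
Proof. exact: conjCK. Qed.

Lemma conjM (a b : algC) : (a * b)^* = a^* * b^*.
Proof. exact: rmorphM. Qed.

Lemma conjS (I : finType) (F : I -> algC) : (\sum_(i : I) F i)^* = \sum_(i : I) (F i)^*.
Proof. exact: rmorph_sum. Qed.

Lemma c_ge0 n : (0 : algC) <= (2 ^+ n)^-1.
Proof. by rewrite invr_ge0 exprn_ge0 // ler0n. Qed.

Lemma c_conj n : (((2 : algC) ^+ n)^-1)^* = (2 ^+ n)^-1.
Proof. by rewrite fmorphV rmorphXn /= rmorph_nat. Qed.

Theorem theorem2p1 (n : nat) (hn : (1 <= n)%N) :
  psd (Dmx n) /\
  (forall j k : 'I_(2 ^ n),
     (odd j != odd k -> Dmx n j k = 0) /\
     (odd j = odd k ->
        (cn n j = cn n k %[mod 4] -> Dmx n j k = (2 ^+ n)^-1) /\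
        (cn n j <> cn n k %[mod 4] -> Dmx n j k = - (2 ^+ n)^-1))) /\
  \sum_(j < 2 ^ n) \sum_(k < 2 ^ n) Dmx n j k = 1.
Proof.
split; [split|split].
- move=> i j; rewrite !Dmx_sum conjM c_conj conjS; congr (_ * _).
  apply: eq_bigr => p _; apply: (etrans _ (esym (conjM _ _))).
  exact: (etrans (mulrC _ _) (congr1 (fun z => _ * z) (esym (conjCK _)))).
- move=> x.
  have -> : ((map_mx (fun z : algC => z^*) x)^T *m Dmx n *m x) 0 0 =
    \sum_(j < 2 ^ n) \sum_(k < 2 ^ n) (x j 0)^* *
       ((2 ^+ n)^-1 * \sum_(p : bool) Av n p j * (Av n p k)^*) * x k 0.
    rewrite mxE. under eq_bigr => k _ do rewrite mxE mulr_suml.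
    rewrite exchange_big /=; apply: eq_bigr => j _; apply: eq_bigr => k _.
    by rewrite Dmx_sum !mxE.
  rewrite qf; apply: mulr_ge0; first exact: c_ge0.
  apply: sumr_ge0 => p _.
  have -> : \sum_(k < 2 ^ n) (Av n p k)^* * x k 0 =
            (\sum_(k < 2 ^ n) (x k 0)^* * Av n p k)^*.
    rewrite conjS; apply: eq_bigr => k _.
    exact: (etrans (mulrC _ _) (etrans (congr1 (fun z => z * _) (esym (conjCK _))) (esym (conjM _ _)))).
  exact: mul_conjC_ge0.
- move=> j k; split.
    by move=> h; rewrite Dmx_entry (negbTE h) mulr0.
  move=> ho.
  have hc : odd (cn n j) = odd (cn n k) by rewrite !odd_cn.
  rewrite Dmx_entry ho eqxx mulr1 -mulrA; split => h.
    by rewrite ipow_eq // mulr1.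
  by rewrite ipow_neq // mulrN1.
- have -> : \sum_(j < 2 ^ n) \sum_(k < 2 ^ n) Dmx n j k =
    \sum_(j < 2 ^ n) \sum_(k < 2 ^ n) 1 *
       ((2 ^+ n)^-1 * \sum_(p : bool) Av n p j * (Av n p k)^*) * 1.
    by apply: eq_bigr => j _; apply: eq_bigr => k _; rewrite Dmx_sum mul1r mulr1.
  rewrite qf big_bool /=.
  have E p : (\sum_(k < 2 ^ n) (Av n p k)^* * 1) = (T n p)^*.
    by rewrite /T conjS; apply: eq_bigr => k _; rewrite mulr1.
  have F p : (\sum_(j < 2 ^ n) 1 * Av n p j) = T n p.
    by apply: eq_bigr => k _; rewrite mul1r.
  by rewrite !E !F addrC Tnorm mulVf // expf_neq0 // pnatr_eq0.
Qed.
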